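(* Suppose $\{x[a_1,a_2]\}_{(a_1,a_2)\in\mathbb{Z}^2}\subset\mathcal{A}(P_1,P_2)$ is a collection such that each $x[a_1,a_2]$ is pointed at $(a_1,a_2)$, and such that $x[a_1,a_2]=z_1[a_1,a_2]$ for all $(a_1,a_2)\in\mathbb{Z}^2\setminus\mathbb{Z}_{>0}^2$. Then $\{x[a_1,a_2]\}_{(a_1,a_2)\in\mathbb{Z}^2}$ is a $\underline\Bbbk$-basis of $\mathcal{A}(P_1,P_2)$.
   Context: $\Bbbk$ is an ordered field and $P_1,P_2\in\Bbbk[z]$ are monic palindromic polynomials with coefficients in the positive cone (palindromic: $P(z)=z^dP(z^{-1})$ for $d=\deg P$). With $x_1,x_2$ commuting indeterminates, define $x_k\in\Bbbk(x_1,x_2)$ for all $k\in\mathbb{Z}$ by $x_{k+1}x_{k-1}=P_1(x_k)$ if $k$ is even and $x_{k+1}x_{k-1}=P_2(x_k)$ if $k$ is odd. $\underline\Bbbk$ is the $\mathbb{Z}$-subalgebra of $\Bbbk$ generated by the coefficients of $P_1,P_2$; $\mathcal{A}(P_1,P_2)$ is the $\underline\Bbbk$-subalgebra of $\Bbbk(x_1,x_2)$ generated by all $x_k$. An element $x\in\underline\Bbbk[x_1^{\pm1},x_2^{\pm1}]$ is pointed at $(a_1,a_2)$ if $x=x_1^{-a_1}x_2^{-a_2}\sum_{p,q\ge0}c(p,q)x_1^px_2^q$ with $c(p,q)\in\underline\Bbbk$ and $c(0,0)=1$. The standard monomial is $z_1[a_1,a_2]=x_0^{[a_2]_+}x_1^{[-a_1]_+}x_2^{[-a_2]_+}x_3^{[a_1]_+}$,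 with $[a]_+=\max(a,0)$. *)

(* Defs.v *)
From HB Require Import structures.
From mathcomp Require Import all_boot all_order all_algebra fraction.
Set Implicit Arguments. Unset Strict Implicit. Unset Printing Implicit Defensive.
Import Order.TTheory GRing.Theory Num.Theory.
Local Open Scope ring_scope.

(* The field of rational functions k(x1,x2), realised as the fraction field
   of k[x1][x2] = {poly {poly k}}: x1 is the inner variable, x2 the outer. *)
Definition ratfun (k : realFieldType) := {fraction {poly {poly k}}}.

Definition tofracK (k : realFieldType) (f : {poly {poly k}}) : ratfun k :=
  FracField.tofrac f.

Definition X1 (k : realFieldType) : ratfun k := tofracK ('X%:P).
Definition X2 (k : realFieldType) : ratfun k := tofracK 'X.

Definition iotaK (k : realFieldType) (c : k) : ratfun k := tofracK ((c%:P)%:P).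

Definition evalK (k : realFieldType) (P : {poly k}) (y : ratfun k) : ratfun k :=
  (map_poly (@iotaK k) P).[y].

(* palindromic: P(z) = z^d P(z^-1), d = deg P, i.e. coefficient symmetry *)
Definition palindromic (k : realFieldType) (P : {poly k}) : Prop :=
  forall i : nat, (i <= (size P).-1)%N -> P`_i = P`_((size P).-1 - i).

Definition pos_coefs (k : realFieldType) (P : {poly k}) : Prop :=
  forall i : nat, 0 <= P`_i.

Section Seq.
Variables (k : realFieldType) (P1 P2 : {poly k}).

Definition Pat (j : int) : {poly k} := if odd `|j|%N then P2 else P1.

(* fwd m = (x_{m+1}, x_{m+2}) *)
Fixpoint fwd (m : nat) : ratfun k * ratfun k :=
  match m with
  | 0%N => (X1 k, X2 k)
  | m'.+1 => let: (a, b) := fwd m' in (b, evalK (Pat (m'.+2)%:Z) b / a)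
  end.

(* bwd m = (x_{1-m}, x_{2-m}) *)
Fixpoint bwd (m : nat) : ratfun k * ratfun k :=
  match m with
  | 0%N => (X1 k, X2 k)
  | m'.+1 => let: (a, b) := bwd m' in (evalK (Pat (1 - m'%:Z)) a / b, a)
  end.

(* x_j for j in Z: x_{j+1} x_{j-1} = P1(x_j) (j even), P2(x_j) (j odd) *)
Definition xseq (j : int) : ratfun k :=
  if 0 < j then (fwd `|j|.-1).1 else (bwd `|1 - j|).1.

Inductive ulk : k -> Prop :=
  | ulk_coef1 i : ulk P1`_i
  | ulk_coef2 i : ulk P2`_i
  | ulk_one : ulk 1
  | ulk_opp c : ulk c -> ulk (- c)
  | ulk_add c d : ulk c -> ulk d -> ulk (c + d)
  | ulk_mul c d : ulk c -> ulk d -> ulk (c * d).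

Inductive inA : ratfun k -> Prop :=
  | inA_gen j : inA (xseq j)
  | inA_const c : ulk c -> inA (iotaK c)
  | inA_add y z : inA y -> inA z -> inA (y + z)
  | inA_mul y z : inA y -> inA z -> inA (y * z).

(* y is an element of ulk[x1^{+-1}, x2^{+-1}] pointed at (a1,a2):
   y = x1^{-a1} x2^{-a2} sum_{p,q>=0} c(p,q) x1^p x2^q, c(p,q) in ulk, c(0,0)=1.
   The coefficient of x1^p x2^q in f : {poly {poly k}} is (f`_q)`_p. *)
Definition pointed (y : ratfun k) (a1 a2 : int) : Prop :=
  exists f : {poly {poly k}},
    (forall p q : nat, ulk (f`_q)`_p) /\ (f`_0)`_0 = 1 /\
    y = X1 k ^ (- a1) * X2 k ^ (- a2) * tofracK f.

Definition posp (a : int) : nat := match a with Posz n => n | Negz _ => 0%N end.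

Definition z1 (a1 a2 : int) : ratfun k :=
  xseq 0 ^+ posp a2 * xseq 1 ^+ posp (- a1) * xseq 2 ^+ posp (- a2)
  * xseq 3 ^+ posp a1.

Definition is_basisA (b : int * int -> ratfun k) : Prop :=
  (forall a, inA (b a)) /\
  (forall (s : seq (int * int)) (c : int * int -> k),
      uniq s -> (forall a, a \in s -> ulk (c a)) ->
      \sum_(a <- s) iotaK (c a) * b a = 0 -> forall a, a \in s -> c a = 0) /\
  (forall y, inA y -> exists (s : seq (int * int)) (c : int * int -> k),
      (forall a, a \in s -> ulk (c a)) /\ y = \sum_(a <- s) iotaK (c a) * b a).

End Seq.

(* Main.v *)
Require Import Defs.
From HB Require Import structures.
From mathcomp Require Import all_boot all_order all_algebra fraction.
From mathcomp Require Import ring lra zify.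
From Stdlib Require ClassicalEpsilon.
Import Order.TTheory GRing.Theory Num.Theory.
Set Implicit Arguments. Unset Strict Implicit. Unset Printing Implicit Defensive.
Local Open Scope ring_scope.

Lemma map_polyC_hornerX (R : comNzRingType) (p : {poly R}) :
  (map_poly polyC p).['X] = p.
Proof.
elim/poly_ind: p => [|p c IH]; first by rewrite map_poly0 horner0.
by rewrite rmorphD rmorphM /= map_polyX map_polyC hornerD hornerMX hornerC IH.
Qed.

Section Basics.
Variable k : realFieldType.
Local Notation R := (ratfun k).
Local Notation tf := (@tofracK k).

Lemma tfD f g : tf (f + g) = tf f + tf g.
Proof. exact: tofracD. Qed.
Lemma tfM f g : tf (f * g) = tf f * tf g.
Proof. exact: tofracM. Qed.
Lemma tfX f n : tf (f ^+ n) = tf f ^+ n.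
Proof. exact: tofracXn. Qed.
Lemma tf0 : tf 0 = 0.
Proof. exact: tofrac0. Qed.
Lemma tf1 : tf 1 = 1.
Proof. exact: tofrac1. Qed.
Lemma tfN f : tf (- f) = - tf f.
Proof. exact: tofracN. Qed.
Lemma tf_sum (I : Type) (s : seq I) (F : I -> {poly {poly k}}) :
  tf (\sum_(i <- s) F i) = \sum_(i <- s) tf (F i).
Proof. exact: (rmorph_sum (@FracField.tofrac _)). Qed.
Lemma tf_inj f g : tf f = tf g -> f = g.
Proof. by move=> /eqP; rewrite /tofracK tofrac_eq => /eqP. Qed.
Lemma tf_neq0 f : f != 0 -> tf f != 0.
Proof. by rewrite /tofracK tofrac_eq0. Qed.

Lemma iotaKE c : iotaK c = tf (c%:P%:P).
Proof. by []. Qed.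
Lemma iotaK0 : iotaK (0 : k) = 0.
Proof. by rewrite iotaKE !polyC0 tf0. Qed.
Lemma iotaK1 : iotaK (1 : k) = 1.
Proof. by rewrite iotaKE !polyC1 tf1. Qed.
Lemma iotaKD (a b : k) : iotaK (a + b) = iotaK a + iotaK b.
Proof. by rewrite !iotaKE !polyCD tfD. Qed.
Lemma iotaKM (a b : k) : iotaK (a * b) = iotaK a * iotaK b.
Proof. by rewrite !iotaKE !polyCM tfM. Qed.
Lemma iotaKN (a : k) : iotaK (- a) = - iotaK a.
Proof. by rewrite !iotaKE !polyCN tfN. Qed.

Lemma evalK_sum (P : {poly k}) (y : R) :
  evalK P y = \sum_(i < size P) iotaK P`_i * y ^+ i.
Proof.
rewrite /evalK horner_coef size_map_inj_poly ?iotaK0 //; last first.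
  by move=> a b; rewrite !iotaKE => /tf_inj /polyC_inj /polyC_inj.
by apply: eq_bigr => i _; rewrite coef_map_id0 // iotaK0.
Qed.

Lemma evalK_X1 (P : {poly k}) : evalK P (X1 k) = tf (P%:P).
Proof.
rewrite /evalK.
have -> : map_poly (@iotaK k) P =
   map_poly (@FracField.tofrac _) (map_poly polyC (map_poly polyC P)).
  by rewrite -!map_poly_comp.
rewrite /X1 /tofracK. rewrite (horner_map (@FracField.tofrac _)) /=.
by rewrite (horner_map polyC) /= map_polyC_hornerX.
Qed.

Lemma evalK_X2 (P : {poly k}) : evalK P (X2 k) = tf (map_poly polyC P).
Proof.
rewrite /evalK.
have -> : map_poly (@iotaK k) P =
   map_poly (@FracField.tofrac _) (map_poly polyC (map_poly polyC P)).
  by rewrite -!map_poly_comp.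
by rewrite /X2 /tofracK (horner_map (@FracField.tofrac _)) /= map_polyC_hornerX.
Qed.

End Basics.

Section Pos.
Variable k : realFieldType.
Local Notation R := (ratfun k).
Local Notation tf := (@tofracK k).

Lemma iotaK_map (P : {poly k}) : map_poly (@iotaK k) P =
   map_poly (@FracField.tofrac _) (map_poly polyC (map_poly polyC P)).
Proof. by rewrite -!map_poly_comp. Qed.

Lemma evalK_step (p : {poly k}) c y :
  evalK (p * 'X + c%:P) y = evalK p y * y + iotaK c.
Proof.
rewrite /evalK !iotaK_map !rmorphD !rmorphM /= !map_polyX !map_polyC /=.
by rewrite hornerD hornerMX hornerC.
Qed.

Definition nnp (f : {poly {poly k}}) := forall i j, 0 <= (f`_i)`_j.

Lemma nnpD f g : nnp f -> nnp g -> nnp (f + g).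
Proof. by move=> hf hg i j; rewrite !coefD addr_ge0. Qed.

Lemma nnpM f g : nnp f -> nnp g -> nnp (f * g).
Proof.
move=> hf hg i j; rewrite coefM coef_sum; apply: sumr_ge0 => m _.
rewrite coefM; apply: sumr_ge0 => l _; exact: mulr_ge0.
Qed.

Lemma nnpC (c : k) : 0 <= c -> nnp (c%:P%:P).
Proof.
move=> hc i j; rewrite coefC; case: (i == 0)%N; last by rewrite coef0.
by rewrite coefC; case: (j == 0)%N.
Qed.

Lemma nnp1 : nnp 1.
Proof. by rewrite -!polyC1; apply: nnpC. Qed.

Lemma nnpXn f n : nnp f -> nnp (f ^+ n).
Proof. by move=> hf; elim: n => [|n IH]; [rewrite expr0; exact: nnp1 | rewrite exprS; apply: nnpM]. Qed.

Lemma nnp_X1 : nnp ('X%:P).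
Proof.
move=> i j; rewrite coefC; case: (i == 0)%N; last by rewrite coef0.
by rewrite coefX; case: (j == 1)%N.
Qed.

Lemma nnp_X2 : nnp 'X.
Proof.
move=> i j; rewrite coefX; case: (i == 1)%N; last by rewrite coef0.
by rewrite coefC; case: (j == 0)%N.
Qed.

Lemma nnp_neq0D f g : nnp f -> nnp g -> f != 0 -> f + g != 0.
Proof.
move=> hf hg f0.
have [i fi0] : exists i, f`_i != 0.
  by exists (size f).-1; rewrite -lead_coefE lead_coef_eq0.
have [j fij0] : exists j, (f`_i)`_j != 0.
  by exists (size f`_i).-1; rewrite -lead_coefE lead_coef_eq0.
apply/eqP => /(congr1 (fun h : {poly {poly k}} => (h`_i)`_j)); rewrite !coefD !coef0 => /eqP.
have hp : 0 < (f`_i)`_j by rewrite lt_def fij0 hf.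
by rewrite gt_eqF // ltr_wpDr.
Qed.

Definition posK (y : R) := exists f g,
  [/\ nnp f, nnp g, f != 0, g != 0 & y = tf f / tf g].

Lemma posK_neq0 y : posK y -> y != 0.
Proof.
case=> f [g [_ _ f0 g0 ->]].
by rewrite mulf_neq0 ?invr_eq0 ?tf_neq0.
Qed.

Lemma posK_tf f : nnp f -> f != 0 -> posK (tf f).
Proof.
move=> hf f0; exists f, 1; split=> //; first exact: nnp1.
  exact: oner_neq0.
by rewrite tf1 divr1.
Qed.

Lemma posKM y z : posK y -> posK z -> posK (y * z).
Proof.
case=> f [g [hf hg f0 g0 ->]]; case=> f' [g' [hf' hg' f0' g0' ->]].
exists (f * f'), (g * g'); split; rewrite ?mulf_neq0 //; try by apply: nnpM.
by rewrite /tofracK !rmorphM mulf_div.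
Qed.

Lemma posKV y : posK y -> posK y^-1.
Proof.
case=> f [g [hf hg f0 g0 ->]]; exists g, f; split=> //.
by rewrite invf_div.
Qed.

Lemma posKD y z : posK y -> z = 0 \/ posK z -> posK (y + z).
Proof.
move=> py [->|]; first by rewrite addr0.
case: py => f [g [hf hg f0 g0 ->]]; case=> f' [g' [hf' hg' f0' g0' ->]].
exists (f * g' + f' * g), (g * g'); split.
- by apply: nnpD; apply: nnpM.
- exact: nnpM.
- by apply: nnp_neq0D; rewrite ?mulf_neq0 //; apply: nnpM.
- by rewrite mulf_neq0.
rewrite tfD !tfM addf_div ?tf_neq0 //.
Qed.

Lemma posK_iota (c : k) : 0 < c -> posK (iotaK c).
Proof.
move=> c0; rewrite iotaKE; apply: posK_tf; first by apply: nnpC; exact: ltW c0.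
by rewrite !polyC_eq0 gt_eqF.
Qed.

Lemma posK_evalK (P : {poly k}) y : P != 0 -> (forall i, 0 <= P`_i) ->
  posK y -> posK (evalK P y).
Proof.
move=> + + py; elim/poly_ind: P => [|p c IH]; first by rewrite eqxx.
move=> P0 hP; rewrite evalK_step.
have hc : 0 <= c by have := hP 0%N; rewrite coefD coefMX coefC /= add0r.
have nnc : iotaK c = 0 \/ posK (iotaK c).
  have [->|c0] := eqVneq c 0; first by left; rewrite iotaK0.
  by right; apply: posK_iota; rewrite lt_def c0.
have [p0|p0] := eqVneq p 0.
  subst p; have -> : evalK 0 y = 0 by rewrite /evalK map_poly0 horner0.
  rewrite mul0r add0r; apply: posK_iota; rewrite lt_def hc andbT.
  by move: P0; rewrite mul0r add0r polyC_eq0.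
rewrite addrC addrC; apply: posKD => //; apply: posKM => //.
apply: IH => // i; have := hP i.+1; by rewrite coefD coefMX coefC /= addr0.
Qed.

Lemma posK_X1 : posK (X1 k).
Proof. apply: posK_tf; [exact: nnp_X1 | by rewrite polyC_eq0 polyX_eq0]. Qed.
Lemma posK_X2 : posK (X2 k).
Proof. apply: posK_tf; [exact: nnp_X2 | by rewrite polyX_eq0]. Qed.

End Pos.

Section Seq.
Variables (k : realFieldType) (P1 P2 : {poly k}).
Hypotheses (mon1 : P1 \is monic) (mon2 : P2 \is monic)
  (pos1 : pos_coefs P1) (pos2 : pos_coefs P2).
Local Notation R := (ratfun k).
Local Notation x := (xseq P1 P2).
Local Notation Pt := (Pat P1 P2).

Lemma xseqS (n : nat) : x n.+1 = (fwd P1 P2 n).1.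
Proof. by rewrite /xseq ltz_nat. Qed.

Lemma xseqSS (n : nat) : x n.+2 = (fwd P1 P2 n).2.
Proof. by rewrite xseqS /=; case: (fwd P1 P2 n). Qed.

Lemma xseqB1 (n : nat) : x (1 - n%:Z) = (bwd P1 P2 n).1.
Proof.
case: n => [|n]; first by rewrite subr0 (xseqS 0).
rewrite /xseq ifF; last by apply/negbTE; rewrite -leNgt; lia.
congr (bwd _ _ _).1; apply/eqP; rewrite -eqz_nat; lia.
Qed.

Lemma xseqB2 (n : nat) : x (2 - n%:Z) = (bwd P1 P2 n).2.
Proof.
case: n => [|n]; first by rewrite subr0 (xseqSS 0).
have -> : 2 - n.+1%:Z = 1 - n%:Z by lia.
by rewrite xseqB1 /=; case: (bwd P1 P2 n).
Qed.

Lemma Pat_neq0 j : Pt j != 0.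
Proof. by rewrite /Pat; case: ifP => _; rewrite -lead_coef_eq0 ?(monicP mon1) ?(monicP mon2) oner_eq0. Qed.

Lemma Pat_nn j i : 0 <= (Pt j)`_i.
Proof. by rewrite /Pat; case: ifP. Qed.

Lemma Pat_monic j : Pt j \is monic.
Proof. by rewrite /Pat; case: ifP. Qed.

Lemma odd_absz2 (j : int) : odd (absz (j + 2)) = odd (absz j).
Proof.
have h : ((absz (j + 2)%R) %% 2 = (absz j) %% 2)%N by lia.
by move: h; rewrite !modn2; case: odd; case: odd.
Qed.

Lemma Pat2 j : Pt (j + 2) = Pt j.
Proof. by rewrite /Pat odd_absz2. Qed.

Lemma fwd_pos n : posK (fwd P1 P2 n).1 /\ posK (fwd P1 P2 n).2.
Proof.
elim: n => [|n]; first by split; [exact: posK_X1 | exact: posK_X2].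
rewrite /=; case: (fwd P1 P2 n) => a b [pa pb]; split=> //=.
apply: posKM; first by apply: posK_evalK => //; [exact: Pat_neq0 | exact: Pat_nn].
exact: posKV.
Qed.

Lemma bwd_pos n : posK (bwd P1 P2 n).1 /\ posK (bwd P1 P2 n).2.
Proof.
elim: n => [|n]; first by split; [exact: posK_X1 | exact: posK_X2].
rewrite /=; case: (bwd P1 P2 n) => a b [pa pb]; split=> //=.
apply: posKM; first by apply: posK_evalK => //; [exact: Pat_neq0 | exact: Pat_nn].
exact: posKV.
Qed.

Lemma xseq_pos j : posK (x j).
Proof.
rewrite /xseq; case: ifP => _; [exact: (fwd_pos _).1 | exact: (bwd_pos _).1].
Qed.

Lemma xseq_neq0 j : x j != 0.
Proof. exact/posK_neq0/xseq_pos. Qed.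

Lemma exch j : x (j + 1) * x (j - 1) = evalK (Pt j) (x j).
Proof.
have [hj|hj] := lerP 2 j.
  have [n ->] : exists n : nat, j = n.+2%:Z by exists `|j - 2|%N; lia.
  have -> : n.+2%:Z + 1 = n.+3 by lia.
  have -> : n.+2%:Z - 1 = n.+1 by lia.
  rewrite xseqS xseqSS !xseqS /=.
  case E: (fwd P1 P2 n) => [a b] /=.
  have a0 : a != 0 by have := (fwd_pos n).1; rewrite E => /posK_neq0.
  by rewrite divfK.
have [n ->] : exists n : nat, j = 1 - n%:Z by exists `|1 - j|%N; lia.
have -> : 1 - n%:Z + 1 = 2 - n%:Z by lia.
have -> : 1 - n%:Z - 1 = 1 - n.+1%:Z by lia.
rewrite xseqB1 xseqB2 xseqB1 /=.
case E: (bwd P1 P2 n) => [a b] /=.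
have b0 : b != 0 by have := (bwd_pos n).2; rewrite E => /posK_neq0.
by rewrite mulrC divfK.
Qed.

End Seq.

Section Abs.
Variable k : realFieldType.
Local Notation R := (ratfun k).
Variables (ul : k -> Prop) (L : R -> Prop).
Hypotheses (ul1 : ul 1) (ulN : forall c, ul c -> ul (- c))
  (LD : forall y z, L y -> L z -> L (y + z))
  (LM : forall y z, L y -> L z -> L (y * z))
  (Lc : forall c, ul c -> L (iotaK c)).

Lemma L1 : L 1.
Proof. by rewrite -iotaK1; apply: Lc. Qed.
Lemma LN y : L y -> L (- y).
Proof. by move=> hy; rewrite -mulN1r -iotaK1 -iotaKN; apply: LM => //; apply: Lc; apply: ulN. Qed.
Lemma L0 : L 0.
Proof. by rewrite -(subrr 1); apply: LD; [exact: L1 | apply: LN; exact: L1]. Qed.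
Lemma LX y n : L y -> L (y ^+ n).
Proof. by move=> hy; elim: n => [|n IH]; [rewrite expr0; exact: L1 | rewrite exprS; apply: LM]. Qed.
Lemma Lsum n (F : 'I_n -> R) : (forall i, L (F i)) -> L (\sum_(i < n) F i).
Proof.
elim: n F => [|n IH] F hF; first by rewrite big_ord0; exact: L0.
by rewrite big_ord_recr /=; apply: LD => //; apply: IH.
Qed.

Lemma pal_key (Q Rp : {poly k}) (hQ : forall i, ul Q`_i) (hR : forall i, ul Rp`_i)
  (R0 : Rp`_0 = 1) (Q0 : Q != 0) (palQ : palindromic Q) (u v w t : R)
  (Lu : L u) (Lv : L v) (Lw : L w) (Lt : L t)
  (e1 : u * w = evalK Q v) (e2 : v * t = evalK Rp w) :
  exists E, L E /\ evalK Q t = w * E.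
Proof.
have [H [LH eH]] : exists H, L H /\ evalK Rp w = 1 + w * H.
  have : Rp != 0 by apply/eqP => R00; move: R0; rewrite R00 coef0 => /eqP; rewrite eq_sym oner_eq0.
  rewrite -size_poly_eq0; case E: (size Rp) => [|n] // _.
  exists (\sum_(i < n) iotaK Rp`_i.+1 * w ^+ i); split.
    by apply: Lsum => i; apply: LM; [apply: Lc | apply: LX].
  rewrite evalK_sum E big_ord_recl /= R0 iotaK1 expr0 mulr1 mulr_sumr.
  by congr (_ + _); apply: eq_bigr => i _; rewrite exprS; ring.
have hG n : exists G, L G /\ (1 + w * H) ^+ n = 1 + w * G.
  elim: n => [|n [G [LG eG]]]; first by exists 0; split; [exact: L0 | rewrite expr0 mulr0 addr0].
  exists (H + G + w * H * G); split; first by apply: LD; [apply: LD| apply: LM; [apply: LM|]].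
  by rewrite exprS eG; ring.
set d := (size Q).-1.
have sQ : size Q = d.+1 by rewrite /d prednK // lt0n size_poly_eq0.
have key n : (n <= d.+1)%N -> exists E, L E /\
   \sum_(i < n) iotaK Q`_i * (t ^+ d * v ^+ i) =
   \sum_(i < n) iotaK Q`_i * t ^+ (d - i) + w * E.
  elim: n => [|n IH] hn; first by exists 0; split; [exact: L0 | rewrite !big_ord0 mulr0 addr0].
  have [E [LE eE]] := IH (ltnW hn).
  have [G [LG eG]] := hG n.
  exists (E + iotaK Q`_n * t ^+ (d - n) * G); split.
    by apply: LD => //; apply: LM => //; apply: LM; [apply: Lc | apply: LX].
  rewrite !big_ord_recr /= eE.
  have -> : t ^+ d * v ^+ n = t ^+ (d - n) * (v * t) ^+ n.
    have hnd : (n <= d)%N by lia.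
    by rewrite exprMn [v ^+ n * _]mulrC mulrA -exprD subnK.
  by rewrite e2 eH eG; ring.
have [E [LE eE]] := key d.+1 (leqnn _).
exists (t ^+ d * u - E); split.
  by apply: LD => //; [apply: LM; [apply: LX|] | apply: LN].
have hrev : \sum_(i < d.+1) iotaK Q`_i * t ^+ (d - i) = evalK Q t.
  rewrite evalK_sum sQ (reindex_inj rev_ord_inj) /=.
  apply: eq_bigr => i _; have hi : (i <= d)%N by rewrite -ltnS.
  by rewrite subSS subKn // -(palQ i).
rewrite -hrev.
have : \sum_(i < d.+1) iotaK Q`_i * (t ^+ d * v ^+ i) = t ^+ d * (u * w).
  by rewrite e1 evalK_sum sQ mulr_sumr; apply: eq_bigr => i _; ring.
rewrite eE => h; apply: (addIr (w * E)); rewrite h; ring.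
Qed.

End Abs.

Section Span.
Variables (k : realFieldType) (P1 P2 : {poly k}).
Local Notation R := (ratfun k).
Local Notation ul := (ulk P1 P2).

Definition Span (F : int * int -> R) (y : R) :=
  exists l : seq (k * (int * int)), (forall p, p \in l -> ul p.1) /\
    y = \sum_(p <- l) iotaK p.1 * F p.2.

Lemma ulk0 : ul 0.
Proof. by rewrite -(subrr 1); apply: ulk_add; [exact: ulk_one | apply: ulk_opp; exact: ulk_one]. Qed.

Variable F : int * int -> R.

Lemma Span0 : Span F 0.
Proof. by exists [::]; split=> //; rewrite big_nil. Qed.

Lemma SpanD y z : Span F y -> Span F z -> Span F (y + z).
Proof.
case=> l [hl ->] [l' [hl' ->]]; exists (l ++ l'); split; last by rewrite big_cat.
by move=> p; rewrite mem_cat => /orP [/hl|/hl'].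
Qed.

Lemma SpanZ c y : ul c -> Span F y -> Span F (iotaK c * y).
Proof.
move=> hc [l [hl ->]]; exists [seq (c * p.1, p.2) | p <- l]; split.
  by move=> q /mapP [p /hl hp ->] /=; apply: ulk_mul.
rewrite big_map mulr_sumr; apply: eq_bigr => p _ /=.
by rewrite iotaKM mulrA.
Qed.

Lemma SpanF a : Span F (F a).
Proof.
exists [:: (1, a)]; split; first by move=> p; rewrite inE => /eqP -> /=; exact: ulk_one.
by rewrite big_seq1 /= iotaK1 mul1r.
Qed.

Lemma Span_seq (I : eqType) (s : seq I) (G : I -> R) (Pr : pred I) :
  (forall i, i \in s -> Pr i -> Span F (G i)) ->
  Span F (\sum_(i <- s | Pr i) G i).
Proof.
elim: s => [|i s IH] h; first by rewrite big_nil; exact: Span0.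
rewrite big_cons; case: ifP => hP.
  apply: SpanD; first by apply: h; rewrite ?inE ?eqxx.
  by apply: IH => j js; apply: h; rewrite inE js orbT.
by apply: IH => j js; apply: h; rewrite inE js orbT.
Qed.

Lemma Span_ord n (G : 'I_n -> R) : (forall i, Span F (G i)) ->
  Span F (\sum_(i < n) G i).
Proof.
elim: n G => [|n IH] G h; first by rewrite big_ord0; exact: Span0.
by rewrite big_ord_recr /=; apply: SpanD => //; apply: IH.
Qed.

End Span.

Lemma Span_trans (k : realFieldType) (P1 P2 : {poly k}) (F F' : int * int -> ratfun k) y :
  (forall a, Span P1 P2 F' (F a)) -> Span P1 P2 F y -> Span P1 P2 F' y.
Proof.
move=> h [l [hl ->]]; apply: Span_seq => p pl _.
exact: (SpanZ (hl p pl)).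
Qed.

Section Mono.
Variables (k : realFieldType) (P1 P2 : {poly k}).
Hypotheses (mon1 : P1 \is monic) (mon2 : P2 \is monic)
  (pal1 : palindromic P1) (pal2 : palindromic P2)
  (pos1 : pos_coefs P1) (pos2 : pos_coefs P2).
Local Notation R := (ratfun k).
Local Notation x := (xseq P1 P2).
Local Notation ul := (ulk P1 P2).
Definition z1p (a : int * int) : R := z1 P1 P2 a.1 a.2.
Local Notation Sp := (Span P1 P2 z1p).

Lemma exch' (j a b : int) : a = j + 1 -> b = j - 1 ->
  x a * x b = evalK (Pat P1 P2 j) (x j).
Proof. by move=> -> ->; apply: exch. Qed.

Lemma x0x2 : x 0 * x 2 = evalK P2 (x 1).
Proof. by rewrite mulrC (@exch' 1) //. Qed.
Lemma x1x3 : x 1 * x 3 = evalK P1 (x 2).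
Proof. by rewrite mulrC (@exch' 2) //. Qed.

Definition M a b c d := x 0 ^+ a * x 1 ^+ b * x 2 ^+ c * x 3 ^+ d.

Lemma posp_nat (n : nat) : posp n%:Z = n.
Proof. by []. Qed.
Lemma posp_Nnat (n : nat) : posp (- n%:Z) = 0%N.
Proof. by case: n. Qed.

Lemma z1E a1 a2 : z1 P1 P2 a1 a2 = M (posp a2) (posp (- a1)) (posp (- a2)) (posp a1).
Proof. by []. Qed.

Lemma std_span a b c d : (a == 0)%N || (c == 0)%N -> (b == 0)%N || (d == 0)%N ->
  Sp (M a b c d).
Proof.
move=> hac hbd.
have -> : M a b c d = z1p (d%:Z - b%:Z, a%:Z - c%:Z).
  rewrite /z1p z1E /= !opprB.
  by case/orP: hac => /eqP ->; case/orP: hbd => /eqP ->;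
    rewrite ?subr0 ?sub0r ?posp_nat ?posp_Nnat.
exact: SpanF.
Qed.

Lemma red1 a b c d : M a.+1 b c.+1 d =
  \sum_(i < size P2) iotaK P2`_i * M a (b + i) c d.
Proof.
have -> : M a.+1 b c.+1 d = (x 0 * x 2) * M a b c d by rewrite /M !exprS; ring.
rewrite x0x2 evalK_sum mulr_suml; apply: eq_bigr => i _.
by rewrite /M exprD; ring.
Qed.

Lemma red2 a b c d : M a b.+1 c d.+1 =
  \sum_(i < size P1) iotaK P1`_i * M a b (c + i) d.
Proof.
have -> : M a b.+1 c d.+1 = (x 1 * x 3) * M a b c d by rewrite /M !exprS; ring.
rewrite x1x3 evalK_sum mulr_suml; apply: eq_bigr => i _.
by rewrite /M exprD; ring.
Qed.

Lemma ul_P1 i : ul P1`_i. Proof. exact: ulk_coef1. Qed.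
Lemma ul_P2 i : ul P2`_i. Proof. exact: ulk_coef2. Qed.

Lemma mono_span n : forall a b c d, (a + d <= n)%N -> Sp (M a b c d).
Proof.
elim: n => [|n IH] a b c d h.
  have [-> ->] : a = 0%N /\ d = 0%N by lia.
  by apply: std_span; rewrite ?eqxx ?orbT.
have [hac|hac] := boolP ((a == 0)%N || (c == 0)%N).
  have [hbd|hbd] := boolP ((b == 0)%N || (d == 0)%N); first exact: std_span.
  case: b d h hbd => [|b] [|d] //= h _.
  rewrite red2; apply: Span_ord => i; apply: SpanZ; first exact: ul_P1.
  apply: IH; lia.
case: a c h hac => [|a] [|c] //= h _.
rewrite red1; apply: Span_ord => i; apply: SpanZ; first exact: ul_P2.
apply: IH; lia.
Qed.

Lemma M_mul a b c d a' b' c' d' :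
  M a b c d * M a' b' c' d' = M (a + a') (b + b') (c + c') (d + d').
Proof. by rewrite /M !exprD; ring. Qed.

Lemma z1p_mul a b : Sp (z1p a * z1p b).
Proof. by rewrite /z1p !z1E M_mul; apply: (@mono_span _ _ _ _ _ (leqnn _)). Qed.

Lemma SpM y z : Sp y -> Sp z -> Sp (y * z).
Proof.
case=> l [hl ->] [l' [hl' ->]]; rewrite mulr_suml.
apply: Span_seq => p pl _; rewrite mulr_sumr; apply: Span_seq => q ql _.
have -> : iotaK p.1 * z1p p.2 * (iotaK q.1 * z1p q.2) =
  iotaK (p.1 * q.1) * (z1p p.2 * z1p q.2) by rewrite iotaKM; ring.
by apply: SpanZ; [apply: ulk_mul; [apply: hl|apply: hl'] | apply: z1p_mul].
Qed.

Lemma Sp_const c : ul c -> Sp (iotaK c).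
Proof.
move=> hc; rewrite -[iotaK c]mulr1; apply: SpanZ => //.
by have := SpanF P1 P2 z1p (0, 0); rewrite /z1p z1E /M /= !expr0 !mulr1.
Qed.

Lemma Sp_x0 : Sp (x 0).
Proof. by have := SpanF P1 P2 z1p (0, 1); rewrite /z1p z1E /M /= expr1 !expr0 !mulr1. Qed.
Lemma Sp_x1 : Sp (x 1).
Proof. by have := SpanF P1 P2 z1p (-1, 0); rewrite /z1p z1E /M /= expr1 !expr0 mul1r !mulr1. Qed.
Lemma Sp_x2 : Sp (x 2).
Proof. by have := SpanF P1 P2 z1p (0, -1); rewrite /z1p z1E /M /= expr1 !expr0 !mul1r !mulr1. Qed.
Lemma Sp_x3 : Sp (x 3).
Proof. by have := SpanF P1 P2 z1p (1, 0); rewrite /z1p z1E /M /= expr1 !expr0 !mul1r. Qed.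

End Mono.

Section AllX.
Variables (k : realFieldType) (P1 P2 : {poly k}).
Hypotheses (mon1 : P1 \is monic) (mon2 : P2 \is monic)
  (pal1 : palindromic P1) (pal2 : palindromic P2)
  (pos1 : pos_coefs P1) (pos2 : pos_coefs P2).
Local Notation R := (ratfun k).
Local Notation x := (xseq P1 P2).
Local Notation ul := (ulk P1 P2).
Local Notation Sp := (Span P1 P2 (z1p P1 P2)).
Local Notation Pt := (Pat P1 P2).

Let SpM' := SpM mon1 mon2 pos1 pos2.
Lemma ex (j a b : int) : a = j + 1 -> b = j - 1 -> x a * x b = evalK (Pt j) (x j).
Proof. by move=> -> ->; apply: exch. Qed.

Lemma monic_pal0 (P : {poly k}) : P \is monic -> palindromic P -> P`_0 = 1.
Proof.
move=> m p; have := p 0%N (leq0n _); rewrite subn0 -lead_coefE.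
by rewrite (monicP m).
Qed.

Lemma Pt_ul j i : ul (Pt j)`_i.
Proof. rewrite /Pat; case: ifP => _; [exact: ulk_coef2 | exact: ulk_coef1]. Qed.
Lemma Pt0 j : (Pt j)`_0 = 1.
Proof. by rewrite /Pat; case: ifP => _; apply: monic_pal0. Qed.
Lemma Pt_pal j : palindromic (Pt j).
Proof. by rewrite /Pat; case: ifP. Qed.

Lemma step4 (jv jw : int) (u v w t y : R) :
  Sp u -> Sp v -> Sp w -> Sp t -> w != 0 ->
  u * w = evalK (Pt jv) v -> v * t = evalK (Pt jw) w ->
  y * w = evalK (Pt jv) t -> Sp y.
Proof.
move=> Lu Lv Lw Lt w0 e1 e2 e3.
have [E [LE eE]] := pal_key (ulk_one P1 P2) (@ulk_opp _ P1 P2) (@SpanD _ P1 P2 _) SpM'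
  (@Sp_const _ P1 P2) (Pt_ul jv) (Pt_ul jw) (Pt0 jw) (Pat_neq0 mon1 mon2 jv)
  (@Pt_pal jv) Lu Lv Lw Lt e1 e2.
suff -> : y = E by [].
by apply: (mulIf w0); rewrite e3 eE mulrC.
Qed.

Lemma Pt_shift (a b : int) : a = b + 2 -> Pt a = Pt b.
Proof. by move=> ->; apply: Pat2. Qed.

Lemma fw (n : nat) : [/\ Sp (x n), Sp (x (n%:Z + 1)), Sp (x (n%:Z + 2)) & Sp (x (n%:Z + 3))].
Proof.
elim: n => [|n [h0 h1 h2 h3]].
  split; [exact: Sp_x0 | exact: Sp_x1 | exact: Sp_x2 | exact: Sp_x3].
have -> : n.+1%:Z = n%:Z + 1 by lia.
have -> : n%:Z + 1 + 1 = n%:Z + 2 by lia.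
have -> : n%:Z + 1 + 2 = n%:Z + 3 by lia.
split => //.
apply: (@step4 (n%:Z + 1) (n%:Z + 2) (x n) (x (n%:Z + 1)) (x (n%:Z + 2)) (x (n%:Z + 3))) => //.
- exact: xseq_neq0.
- by rewrite mulrC (@ex (n%:Z + 1) (n%:Z + 2) n) //; lia.
- by rewrite mulrC (@ex (n%:Z + 2) (n%:Z + 3) (n%:Z + 1)) //; lia.
- by rewrite (@ex (n%:Z + 3) (n%:Z + 1 + 3) (n%:Z + 2)); try lia; congr evalK; apply: Pt_shift; lia.
Qed.

Lemma bw (n : nat) : [/\ Sp (x (- n%:Z)), Sp (x (1 - n%:Z)), Sp (x (2 - n%:Z)) & Sp (x (3 - n%:Z))].
Proof.
elim: n => [|n [h0 h1 h2 h3]].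
  split; [exact: Sp_x0 | exact: Sp_x1 | exact: Sp_x2 | exact: Sp_x3].
have -> : 1 - n.+1%:Z = - n%:Z by lia.
have -> : 2 - n.+1%:Z = 1 - n%:Z by lia.
have -> : 3 - n.+1%:Z = 2 - n%:Z by lia.
split => //.
apply: (@step4 (2 - n%:Z) (1 - n%:Z) (x (3 - n%:Z)) (x (2 - n%:Z)) (x (1 - n%:Z)) (x (- n%:Z))) => //.
- exact: xseq_neq0.
- by rewrite (@ex (2 - n%:Z) (3 - n%:Z) (1 - n%:Z)) //; lia.
- by rewrite (@ex (1 - n%:Z) (2 - n%:Z) (- n%:Z)) //; lia.
- by rewrite mulrC (@ex (- n%:Z) (1 - n%:Z) (- n.+1%:Z)); try lia; congr evalK; apply/esym/Pt_shift; lia.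
Qed.

Lemma Sp_x j : Sp (x j).
Proof.
have [hj|hj] := lerP 0 j.
  have -> : j = `|j|%N%:Z by lia.
  by case: (fw `|j|%N).
have -> : j = - `|j|%N%:Z by lia.
by case: (bw `|j|%N).
Qed.

Lemma inA_Sp y : inA P1 P2 y -> Sp y.
Proof.
elim=> [j|c hc|y1 y2 _ h1 _ h2|y1 y2 _ h1 _ h2].
- exact: Sp_x.
- exact: Sp_const.
- exact: SpanD.
- exact: SpM'.
Qed.

End AllX.

Section Coef.
Variable k : realFieldType.
Local Notation R := (ratfun k).
Local Notation tf := (@tofracK k).

Definition pc (f : {poly {poly k}}) (d : int * int) : k :=
  if (0 <= d.1) && (0 <= d.2) then (f`_(absz d.2))`_(absz d.1) else 0.

Definition subp (b m : int * int) : int * int := (b.1 - m.1, b.2 - m.2).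

Definition bnd (s : seq (int * int)) : nat := \sum_(b <- s) (absz b.1 + absz b.2)%N.

Lemma bnd_mem s b : b \in s -> (absz b.1 <= bnd s)%N /\ (absz b.2 <= bnd s)%N.
Proof.
elim: s => [|b' s IH] //; rewrite inE /bnd big_cons -/(bnd s).
case/orP => [/eqP ->|/IH [h1 h2]].
  by split; [rewrite -addnA leq_addr | rewrite addnAC leq_addl].
by split; [exact: leq_trans h1 (leq_addl _ _) | exact: leq_trans h2 (leq_addl _ _)].
Qed.

Lemma pc_shift (f : {poly {poly k}}) (e1 e2 u v : nat) :
  ((('X^u)%:P * ('X^v * f))`_e2)`_e1 = pc f (e1%:Z - u%:Z, e2%:Z - v%:Z).
Proof.
rewrite /pc /=.
have E1 : (0 <= e1%:Z - u%:Z) = (u <= e1)%N by apply/idP/idP; lia.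
have E2 : (0 <= e2%:Z - v%:Z) = (v <= e2)%N by apply/idP/idP; lia.
rewrite E1 E2 coefCM !coefXnM.
case: (ltnP e1 u) => h1; case: (ltnP e2 v) => h2 /=; rewrite ?andbF ?andbT ?coef0 //.
have A1 : absz (e1%:Z - u%:Z) = (e1 - u)%N by lia.
have A2 : absz (e2%:Z - v%:Z) = (e2 - v)%N by lia.
by rewrite A1 A2.
Qed.

Lemma X1_neq0 : X1 k != 0. Proof. exact/posK_neq0/posK_X1. Qed.
Lemma X2_neq0 : X2 k != 0. Proof. exact/posK_neq0/posK_X2. Qed.

Lemma shiftX (y : R) (b : int) (N : nat) : y != 0 -> (absz b <= N)%N ->
  y ^ (- b) * y ^+ N = y ^+ (absz (N%:Z - b)).
Proof.
move=> y0 hb; rewrite exprnP -exprzDr ?unitfE //.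
have -> : - b + N%:Z = (absz (N%:Z - b))%:Z by lia.
by rewrite -exprnP.
Qed.

Lemma term_tf (c : k) (b : int * int) (f : {poly {poly k}}) (N : nat) :
  (absz b.1 <= N)%N -> (absz b.2 <= N)%N ->
  iotaK c * (X1 k ^ (- b.1) * X2 k ^ (- b.2) * tf f) * (X1 k ^+ N * X2 k ^+ N) =
  tf (c%:P%:P * (('X^(absz (N%:Z - b.1)))%:P * ('X^(absz (N%:Z - b.2)) * f))).
Proof.
move=> h1 h2.
rewrite !tfM -iotaKE rmorphXn !tfX -[tf ('X%:P)]/(X1 k) -[tf 'X]/(X2 k).
rewrite -(shiftX X1_neq0 h1) -(shiftX X2_neq0 h2).
set A := X1 k ^ (- b.1); set B := X2 k ^ (- b.2).
ring.
Qed.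


Lemma coef_term (c : k) (b m : int * int) (f : {poly {poly k}}) (N : nat) :
  (absz b.1 <= N)%N -> (absz b.2 <= N)%N ->
  (absz m.1 <= N)%N -> (absz m.2 <= N)%N ->
  (((c%:P%:P * (('X^(absz (N%:Z - b.1)))%:P * ('X^(absz (N%:Z - b.2)) * f)))
     `_(absz (N%:Z - m.2)))`_(absz (N%:Z - m.1))) = c * pc f (subp b m).
Proof.
move=> h1 h2 h3 h4; rewrite coefCM (coefCM c) pc_shift /subp; congr (_ * pc _ (_, _)); lia.
Qed.

Lemma coef_identity (s : seq (int * int)) (c : int * int -> k)
  (f : int * int -> {poly {poly k}}) (a : int * int) (g : {poly {poly k}}) :
  \sum_(b <- s) iotaK (c b) * (X1 k ^ (- b.1) * X2 k ^ (- b.2) * tf (f b)) =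
    X1 k ^ (- a.1) * X2 k ^ (- a.2) * tf g ->
  forall m, \sum_(b <- s) c b * pc (f b) (subp b m) = pc g (subp a m).
Proof.
move=> H m.
set N := bnd (a :: m :: s).
have hN b : b \in a :: m :: s -> (absz b.1 <= N)%N /\ (absz b.2 <= N)%N by apply: bnd_mem.
have [ha1 ha2] := hN a (mem_head _ _).
have [hm1 hm2] : (absz m.1 <= N)%N /\ (absz m.2 <= N)%N by apply: hN; rewrite !inE eqxx orbT.
have hs b : b \in s -> (absz b.1 <= N)%N /\ (absz b.2 <= N)%N.
  by move=> bs; apply: hN; rewrite !inE bs !orbT.
have H' := congr1 (fun y => y * (X1 k ^+ N * X2 k ^+ N)) H; move: H' => /=.
rewrite mulr_suml.
pose T b := (c b)%:P%:P * (('X^(absz (N%:Z - b.1)))%:P * ('X^(absz (N%:Z - b.2)) * f b)).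
rewrite (eq_big_seq (fun b => tf (T b))); last first.
  by move=> b bs; have [h1 h2] := hs b bs; rewrite term_tf.
rewrite -[X1 k ^ (- a.1) * _ * tf g]mul1r -iotaK1 term_tf // -tf_sum => /tf_inj PE.
have := congr1 (fun h : {poly {poly k}} => (h`_(absz (N%:Z - m.2)))`_(absz (N%:Z - m.1))) PE.
rewrite /= !coef_sum coef_term // mul1r => <-.
apply: eq_big_seq => b bs; have [h1 h2] := hs b bs.
by rewrite /T coef_term.
Qed.

End Coef.

Definition le2 (b b' : int * int) := (b.1 <= b'.1) && (b.2 <= b'.2).

Lemma le2_trans a b c : le2 a b -> le2 b c -> le2 a c.
Proof. by rewrite /le2 => /andP [h1 h2] /andP [h3 h4]; apply/andP; split; lia. Qed.

Lemma max_sum (s : seq (int * int)) : s != [::] ->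
  exists2 x : int * int, x \in s & forall y : int * int, y \in s -> y.1 + y.2 <= x.1 + x.2.
Proof.
elim: s => [|b s IH] // _.
have [->|sn] := eqVneq s [::].
  by exists b; rewrite ?mem_head // => y; rewrite inE => /eqP ->.
have [x xs hx] := IH sn.
have [hle|hlt] := lerP (b.1 + b.2) (x.1 + x.2).
  exists x; first by rewrite inE xs orbT.
  by move=> y; rewrite inE => /orP [/eqP ->|/hx].
exists b; first exact: mem_head.
move=> y; rewrite inE => /orP [/eqP ->|/hx h] //; lia.
Qed.

Lemma big_single (T : eqType) (V : nmodType) (s : seq T) (G : T -> V) (b0 : T) :
  uniq s -> b0 \in s -> (forall b, b \in s -> b != b0 -> G b = 0) ->
  \sum_(b <- s) G b = G b0.
Proof.
move=> us bs h; rewrite (bigD1_seq b0) //= big1_seq ?addr0 //.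
by move=> b /andP [nb bs']; apply: h.
Qed.

Section Comb.
Variable k : realFieldType.

Lemma pc_le (f : {poly {poly k}}) b m : ~~ le2 m b -> pc f (subp b m) = 0.
Proof.
rewrite /pc /subp /le2 /= => h; rewrite ifF //; apply/negbTE.
move: h; rewrite !negb_and -!ltNge => /orP [h|h]; apply/orP; [left|right]; lia.
Qed.

Lemma pc_diag (f : {poly {poly k}}) b : pc f (subp b b) = (f`_0)`_0.
Proof. by rewrite /pc /subp /= !subrr. Qed.

Lemma le2_antisym a b : le2 a b -> le2 b a -> a = b.
Proof.
case: a b => [a1 a2] [b1 b2]; rewrite /le2 /= => /andP [h1 h2] /andP [h3 h4].
by congr (_, _); lia.
Qed.

Lemma le2_of_sum (a b : int * int) : le2 a b -> b.1 + b.2 <= a.1 + a.2 -> le2 b a.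
Proof. by rewrite /le2 => /andP [l1 l2] hs; apply/andP; split; lia. Qed.

Lemma support_le (s : seq (int * int)) (c : int * int -> k)
  (f : int * int -> {poly {poly k}}) (a : int * int) (g : {poly {poly k}}) :
  uniq s -> (forall b, ((f b)`_0)`_0 = 1) ->
  (forall m, \sum_(b <- s) c b * pc (f b) (subp b m) = pc g (subp a m)) ->
  forall b, b \in s -> c b != 0 -> le2 b a.
Proof.
move=> us hf H b0 b0s cb0; apply/negPn/negP => nb0.
set T := [seq b <- s | (c b != 0) && ~~ le2 b a].
have Tn : T != [::].
  by apply/eqP => /(congr1 (fun t => b0 \in t)); rewrite mem_filter cb0 nb0 b0s.
have [bs bsT hmax] := max_sum Tn.
move: (bsT); rewrite mem_filter => /andP [/andP [cbs nbs] bss].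
have := H bs.
rewrite (pc_le g nbs) (@big_single _ _ s _ bs) //; first by rewrite pc_diag hf mulr1 => /eqP; rewrite (negbTE cbs).
move=> b bs' nbb.
have [->|cb] := eqVneq (c b) 0; first by rewrite mul0r.
have [lb|nlb] := boolP (le2 bs b); last by rewrite pc_le ?mulr0.
have nba : ~~ le2 b a by apply: contra nbs => h; exact: le2_trans lb h.
have bT : b \in T by rewrite mem_filter cb nba bs'.
have hs := hmax b bT.
have lb' := le2_of_sum lb hs.
by rewrite (le2_antisym lb' lb) eqxx in nbb.
Qed.
Lemma lead_one (s : seq (int * int)) (c : int * int -> k)
  (f : int * int -> {poly {poly k}}) (a : int * int) (g : {poly {poly k}}) :
  uniq s -> (forall b, ((f b)`_0)`_0 = 1) -> (g`_0)`_0 = 1 ->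
  (forall m, \sum_(b <- s) c b * pc (f b) (subp b m) = pc g (subp a m)) ->
  a \in s /\ c a = 1.
Proof.
move=> us hf hg H.
have supp := support_le us hf H.
have h0 b : b \in s -> b != a -> c b * pc (f b) (subp b a) = 0.
  move=> bs nba; have [->|cb] := eqVneq (c b) 0; first by rewrite mul0r.
  have lba := supp b bs cb.
  have [lab|nlab] := boolP (le2 a b); last by rewrite pc_le ?mulr0.
  by rewrite (le2_antisym lba lab) eqxx in nba.
have := H a; rewrite pc_diag hg.
have [as_|nas] := boolP (a \in s).
  by rewrite (big_single us as_ h0) pc_diag hf mulr1.
rewrite big1_seq; first by move/eqP; rewrite eq_sym oner_eq0.
move=> b /andP [_ bs]; apply: h0 => //; apply: contraNneq nas => <-.
exact: bs.
Qed.

Lemma indep (s : seq (int * int)) (c : int * int -> k)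
  (f : int * int -> {poly {poly k}}) :
  uniq s -> (forall b, ((f b)`_0)`_0 = 1) ->
  \sum_(b <- s) iotaK (c b) * (X1 k ^ (- b.1) * X2 k ^ (- b.2) * tofracK (f b)) = 0 ->
  forall b, b \in s -> c b = 0.
Proof.
move=> us hf H b bs; apply/eqP; apply/negP => /negP cb.
pose a := (b.1 - 1, b.2).
have H' : \sum_(b <- s) iotaK (c b) * (X1 k ^ (- b.1) * X2 k ^ (- b.2) * tofracK (f b)) =
   X1 k ^ (- a.1) * X2 k ^ (- a.2) * tofracK 0 by rewrite H tf0 mulr0.
have := support_le us hf (coef_identity H') bs cb.
by rewrite /le2 /a /=; apply/negP; rewrite negb_and -ltNge; apply/orP; left; lia.
Qed.

End Comb.

Section Merge.
Variables (k : realFieldType) (P1 P2 : {poly k}).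
Local Notation R := (ratfun k).
Local Notation ul := (ulk P1 P2).

Lemma merge_span (l : seq (k * (int * int))) : (forall p, p \in l -> ul p.1) ->
  exists (s : seq (int * int)) (c : int * int -> k), [/\ uniq s,
    (forall a, a \in s -> ul (c a)) &
    forall F : int * int -> R, \sum_(p <- l) iotaK p.1 * F p.2 = \sum_(a <- s) iotaK (c a) * F a].
Proof.
elim: l => [|[c0 a0] l IH] hl.
  by exists [::], (fun _ => 0); split=> // F; rewrite !big_nil.
have hl' : forall p, p \in l -> ul p.1 by move=> p pl; apply: hl; rewrite inE pl orbT.
have [s [c [us hc hF]]] := IH hl'.
have hc0 : ul c0 by apply: (hl (c0, a0)); rewrite mem_head.
have [as_|nas] := boolP (a0 \in s).
  exists s, (fun a => if a == a0 then c a + c0 else c a); split=> //.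
    by move=> a a_s /=; case: ifP => _; [apply: ulk_add; [apply: hc|] | apply: hc].
  move=> F; rewrite big_cons /= hF !(bigD1_seq a0) //= eqxx iotaKD.
  rewrite (eq_bigl (fun i => i != a0)) //.
  under [in RHS]eq_bigr => i /negbTE -> do [].
  by rewrite mulrDl addrCA addrA.
exists (a0 :: s), (fun a => if a == a0 then c0 else c a); split.
- by rewrite /= nas us.
- by move=> a; rewrite inE => /orP [/eqP ->|a_s]; rewrite ?eqxx //; case: ifP => _ //; apply: hc.
move=> F; rewrite !big_cons /= eqxx hF; congr (_ + _).
apply: eq_big_seq => a a_s; case: ifP => // /eqP ea.
by move: nas; rewrite -ea a_s.
Qed.

Lemma SpanN (F : int * int -> R) y : Span P1 P2 F y -> Span P1 P2 F (- y).
Proof.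
move=> h; rewrite -mulN1r -iotaK1 -iotaKN; apply: SpanZ => //.
by apply: ulk_opp; exact: ulk_one.
Qed.

End Merge.

Section Pointed.
Variables (k : realFieldType) (P1 P2 : {poly k}).
Hypotheses (mon1 : P1 \is monic) (mon2 : P2 \is monic)
  (pal1 : palindromic P1) (pal2 : palindromic P2)
  (pos1 : pos_coefs P1) (pos2 : pos_coefs P2).
Local Notation R := (ratfun k).
Local Notation x := (xseq P1 P2).
Local Notation tf := (@tofracK k).

Lemma exprz_posp (y : R) (b : int) : y ^ (- b) = y ^+ posp (- b) / y ^+ posp b.
Proof.
case: b => n.
  by rewrite posp_Nnat posp_nat expr0 div1r -exprnN.
rewrite NegzE opprK posp_nat /= expr0 divr1.
by rewrite -exprnP.
Qed.

Lemma x0E : x 0 = tf (P2%:P) / X2 k.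
Proof. by rewrite (xseqB1 mon1 mon2 1) /= /Pat /= evalK_X1. Qed.
Lemma x3E : x 3 = tf (map_poly polyC P1) / X1 k.
Proof. by rewrite (xseqS _ _ 2) /= /Pat /= evalK_X2. Qed.

Definition Fz (b : int * int) : {poly {poly k}} :=
  (P2%:P) ^+ posp b.2 * (map_poly polyC P1) ^+ posp b.1.

Lemma coef0X (S : nzRingType) (p : {poly S}) n : (p ^+ n)`_0 = (p`_0) ^+ n.
Proof. by elim: n => [|n IH]; rewrite ?expr0 ?coefC // !exprS coef0M IH. Qed.

Lemma Fz00 b : ((Fz b)`_0)`_0 = 1.
Proof.
rewrite /Fz coef0M !coef0X coefC eqxx coef_map /= coef0M !coef0X coefC eqxx.
by rewrite (monic_pal0 mon2 pal2) (monic_pal0 mon1 pal1) !expr1n mulr1.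
Qed.

Lemma z1_pointed b : z1p P1 P2 b = X1 k ^ (- b.1) * X2 k ^ (- b.2) * tf (Fz b).
Proof.
rewrite /z1p /z1 /Fz tfM !tfX x0E x3E !exprz_posp !expr_div_n.
have -> : x 1 = X1 k by [].
have -> : x 2 = X2 k by [].
move: (tf P2%:P ^+ posp b.2) (tf P1^:P ^+ posp b.1) => A B.
move: (X1 k ^+ posp (- b.1)) (X1 k ^+ posp b.1) (X2 k ^+ posp (- b.2)) (X2 k ^+ posp b.2).
move=> u v w z.
rewrite !mulrA; ring.
Qed.


End Pointed.

Lemma lt_sum (a b : int * int) : le2 b a -> b != a -> 0 < b.1 -> 0 < b.2 ->
  (absz b.1 + absz b.2 < absz a.1 + absz a.2)%N.
Proof.
case: a b => [a1 a2] [b1 b2]; rewrite /le2 /= => /andP [l1 l2] nba p1 p2.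
have [e1|ne1] := eqVneq b1 a1; have [e2|ne2] := eqVneq b2 a2.
- by move: nba; rewrite e1 e2 eqxx.
- have : b2 < a2 by rewrite lt_neqAle ne2 l2.
  lia.
- have : b1 < a1 by rewrite lt_neqAle ne1 l1.
  lia.
- have : b1 < a1 by rewrite lt_neqAle ne1 l1.
  lia.
Qed.

Section Main.
Variables (k : realFieldType) (P1 P2 : {poly k}).
Hypotheses (mon1 : P1 \is monic) (mon2 : P2 \is monic)
  (pal1 : palindromic P1) (pal2 : palindromic P2)
  (pos1 : pos_coefs P1) (pos2 : pos_coefs P2).
Variable x : int -> int -> ratfun k.
Hypotheses (xA : forall a1 a2 : int, inA P1 P2 (x a1 a2))
  (xpt : forall a1 a2 : int, pointed P1 P2 (x a1 a2) a1 a2)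
  (xstd : forall a1 a2 : int, ~ (0 < a1 /\ 0 < a2) -> x a1 a2 = z1 P1 P2 a1 a2).
Local Notation xp := (fun a : int * int => x a.1 a.2).
Local Notation tf := (@tofracK k).

Lemma z1_span n : forall a : int * int, 0 < a.1 -> 0 < a.2 ->
  (absz a.1 + absz a.2 <= n)%N -> Span P1 P2 xp (z1p P1 P2 a).
Proof.
elim: n => [|n IH] a h1 h2 hn; first by exfalso; lia.
have [l [hl El]] := inA_Sp mon1 mon2 pal1 pal2 pos1 pos2 (xA a.1 a.2).
have [s [c [us hc hF]]] := merge_span hl.
rewrite hF in El.
have [g [_ [g00 Eg]]] := xpt a.1 a.2.
have H : \sum_(b <- s) iotaK (c b) * (X1 k ^ (- b.1) * X2 k ^ (- b.2) * tf (Fz P1 P2 b)) =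
    X1 k ^ (- a.1) * X2 k ^ (- a.2) * tf g.
  by rewrite -Eg El; apply: eq_bigr => b _; rewrite z1_pointed.
have HC := coef_identity H.
have hf := Fz00 mon1 mon2 pal1 pal2.
have [as_ ca1] := lead_one us hf g00 HC.
have E2 : z1p P1 P2 a = x a.1 a.2 - \sum_(b <- s | b != a) iotaK (c b) * z1p P1 P2 b.
  by rewrite El (bigD1_seq a) //= ca1 iotaK1 mul1r addrK.
rewrite E2; apply: SpanD; first exact: (SpanF P1 P2 xp a).
apply: SpanN; apply: Span_seq => b bs nba.
have [->|cb] := eqVneq (c b) 0; first by rewrite iotaK0 mul0r; exact: Span0.
apply: SpanZ; first exact: hc.
have lba := support_le us hf HC bs cb.
have [b1|b1] := ltrP 0 b.1; last first.
  rewrite /z1p -xstd; first exact: (SpanF P1 P2 xp b).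
  by case=> h _; move: b1; rewrite leNgt h.
have [b2|b2] := ltrP 0 b.2; last first.
  rewrite /z1p -xstd; first exact: (SpanF P1 P2 xp b).
  by case=> _ h; move: b2; rewrite leNgt h.
apply: IH => //.
have := lt_sum lba nba b1 b2; lia.
Qed.

Lemma z1_span_all a : Span P1 P2 xp (z1p P1 P2 a).
Proof.
have [h1|h1] := ltrP 0 a.1; last first.
  rewrite /z1p -xstd; first exact: (SpanF P1 P2 xp a).
  by case=> h _; move: h1; rewrite leNgt h.
have [h2|h2] := ltrP 0 a.2; last first.
  rewrite /z1p -xstd; first exact: (SpanF P1 P2 xp a).
  by case=> _ h; move: h2; rewrite leNgt h.
exact: (@z1_span _ a h1 h2 (leqnn _)).
Qed.

Lemma main_basis : is_basisA P1 P2 xp.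
Proof.
split; first by move=> a; exact: xA.
split.
  move=> s c us _ H.
  pose f (a : int * int) := proj1_sig (ClassicalEpsilon.constructive_indefinite_description _ (xpt a.1 a.2)).
  have hfs a : [/\ (forall p q : nat, ulk P1 P2 ((f a)`_q)`_p), ((f a)`_0)`_0 = 1 &
      x a.1 a.2 = X1 k ^ (- a.1) * X2 k ^ (- a.2) * tf (f a)].
    by have [h1 [h2 h3]] := proj2_sig (ClassicalEpsilon.constructive_indefinite_description _ (xpt a.1 a.2)).
  apply: (@indep _ s c f us); first by move=> a; have [] := hfs a.
  rewrite -[X in _ = X]H; apply: eq_bigr => a _; by have [_ _ ->] := hfs a.
move=> y yA.
have [l [hl ->]] := Span_trans z1_span_all (inA_Sp mon1 mon2 pal1 pal2 pos1 pos2 yA).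
have [s [c [us hc hF]]] := merge_span hl.
by exists s, c; split => //; rewrite (hF xp).
Qed.

End Main.

Theorem proposition2p9 (k : realFieldType) (P1 P2 : {poly k})
  (mon1 : P1 \is monic) (mon2 : P2 \is monic)
  (pal1 : palindromic P1) (pal2 : palindromic P2)
  (pos1 : pos_coefs P1) (pos2 : pos_coefs P2)
  (x : int -> int -> ratfun k)
  (xA : forall a1 a2 : int, inA P1 P2 (x a1 a2))
  (xpt : forall a1 a2 : int, pointed P1 P2 (x a1 a2) a1 a2)
  (xstd : forall a1 a2 : int, ~ (0 < a1 /\ 0 < a2) -> x a1 a2 = z1 P1 P2 a1 a2) :
  is_basisA P1 P2 (fun a => x a.1 a.2).
Proof. exact: (main_basis mon1 mon2 pal1 pal2 pos1 pos2 xA xpt xstd). Qed.
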